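(* For any metrized graph $\Gamma$ with $v$ vertices, $$Kf(\Gamma) \leq \frac{v^2}{4}\, y(\Gamma).$$
   Context: A metrized graph $\Gamma$ is a finite connected graph (multiple edges and self-loops allowed) each of whose edges is identified with a closed segment of positive length, with a finite nonempty vertex set $V(\Gamma)$ containing every point of valence $\neq2$; $v=\#V(\Gamma)$, $L_i$ the length of $e_i$, $r$ the effective resistance (edges as resistors of resistance equal to length). $Kf(\Gamma)=\frac12\sum_{p,q\in V(\Gamma)}r(p,q)$. For an edge $e_i$ with end points $p_i,q_i$: if $\Gamma-e_i$ (interior deleted) is connected, $R_i$ is the effective resistance between $p_i,q_i$ in $\Gamma-e_i$, $R_{a_i,p}=\hat j_{p_i}(p,q_i)$, $R_{b_i,p}=\hat j_{q_i}(p,p_i)$ with $\hat j_z(x,y)$ the voltage function of $\Gamma-e_i$ (potential at $x$ when unit current enters at $y$ and exits at $z$, potential $0$ at $z$); if $e_i$ is a bridge, $R_{a_i,p}=0,R_{b_i,p}=R_i$ for $p$ in the component of $\Gamma-e_i$ containing $p_i$ and $R_{a_i,p}=R_i,R_{b_i,p}=0$ otherwise, with every expression in $R_i$ interpreted as its limit as $R_i\to\infty$; for a self-loop $R_i=0$. For a fixed vertex $p$ (independent of choice), $y(\Gamma)=\frac14\sum_{e_i}\frac{L_iR_i^2}{(L_i+R_i)^2}+\frac34\sum_{e_i}\frac{L_i(R_{a_i,p}-R_{b_i,p})^2}{(L_i+R_i)^2}$. *)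

(* Defs.v *)
From HB Require Import structures.
From mathcomp Require Import all_boot all_order all_algebra.
From mathcomp Require Import reals.
From Stdlib Require Import ClassicalEpsilon.
Set Implicit Arguments. Unset Strict Implicit. Unset Printing Implicit Defensive.
Import Order.TTheory GRing.Theory Num.Theory.
Local Open Scope ring_scope.

Section MetrizedGraph.
(* A metrized graph given by a model: vertex set V, edge set E, edge e joins
   the end points ep1 e and ep2 e (self-loops / multiple edges allowed),
   and has length L e (> 0, assumed in the theorem). A sub-network is given
   by a predicate S on E selecting the edges that are present. *)
Variables (R : realType) (V E : finType) (ep1 ep2 : E -> V) (L : E -> R).

Definition adj (S : pred E) : rel V :=
  fun u w => [exists e, S e && (((ep1 e == u) && (ep2 e == w)) ||
                                ((ep1 e == w) && (ep2 e == u)))].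

Definition connectedb (S : pred E) : bool :=
  [forall u, [forall w, connect (adj S) u w]].

(* f is the voltage function of the network S (edges as resistors of
   resistance L e) when unit current enters at y and exits at z, with
   potential 0 at z: Kirchhoff's current law at every vertex. *)
Definition is_voltage (S : pred E) (z y : V) (f : V -> R) : Prop :=
  f z = 0 /\
  forall u : V,
    \sum_(e | S e && (ep1 e == u)) (f u - f (ep2 e)) / L e
  + \sum_(e | S e && (ep2 e == u)) (f u - f (ep1 e)) / L e
  = (u == y)%:R - (u == z)%:R.

Definition voltage (S : pred E) (z y : V) : V -> R :=
  epsilon (inhabits (fun _ : V => 0)) (is_voltage S z y).

Definition jhat (S : pred E) (z x y : V) : R := voltage S z y x.

Definition res (S : pred E) (a b : V) : R := jhat S b a a.

Definition allE : pred E := predT.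
Definition delE (e : E) : pred E := [pred e' | e' != e].

Definition is_bridge (e : E) : bool := ~~ connectedb (delE e).

Definition Ri (e : E) : R := res (delE e) (ep1 e) (ep2 e).
Definition Rai (e : E) (p : V) : R := jhat (delE e) (ep1 e) p (ep2 e).
Definition Rbi (e : E) (p : V) : R := jhat (delE e) (ep2 e) p (ep1 e).

(* For a bridge, the terms are their limits as R_i -> oo, namely L_i
   (both for L R^2/(L+R)^2 and for L (R_a - R_b)^2/(L+R)^2, since then
   {R_a, R_b} = {0, R_i}). *)
Definition yterm1 (e : E) : R :=
  if is_bridge e then L e
  else L e * (Ri e) ^+ 2 / (L e + Ri e) ^+ 2.

Definition yterm2 (e : E) (p : V) : R :=
  if is_bridge e then L e
  else L e * (Rai e p - Rbi e p) ^+ 2 / (L e + Ri e) ^+ 2.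

Definition ygraph (p : V) : R :=
  4^-1 * \sum_e yterm1 e + (3 / 4) * \sum_e yterm2 e p.

Definition Kf : R := 2^-1 * \sum_(a : V) \sum_(b : V) res allE a b.

End MetrizedGraph.

(* Main.v *)
Require Import Defs.
From HB Require Import structures.
From mathcomp Require Import all_boot all_order all_algebra.
From mathcomp Require Import reals.
From Stdlib Require Import ClassicalEpsilon.
From mathcomp Require Import ring lra.
Set Implicit Arguments. Unset Strict Implicit. Unset Printing Implicit Defensive.
Import Order.TTheory GRing.Theory Num.Theory.
Local Open Scope ring_scope.

Section Net.
Variables (R : realType) (V E : finType) (ep1 ep2 : E -> V) (L : E -> R).
Hypothesis L_pos : forall e, 0 < L e.

Definition lap (S : pred E) (f : V -> R) (u : V) : R :=
    \sum_(e | S e && (ep1 e == u)) (f u - f (ep2 e)) / L e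
  + \sum_(e | S e && (ep2 e == u)) (f u - f (ep1 e)) / L e.

Definition Df (f : V -> R) (e : E) := f (ep1 e) - f (ep2 e).

Lemma sum_end (P : pred E) (h : E -> V) (F : V -> E -> R) :
  \sum_u \sum_(e | P e && (h e == u)) F u e = \sum_(e | P e) F (h e) e.
Proof.
rewrite (exchange_big_dep P) /=; last by move=> u e _ /andP[].
apply: eq_bigr => e Pe.
rewrite (bigD1 (h e)) ?Pe ?eqxx //= big1 ?addr0 //.
by move=> u /andP[/eqP-> ]; rewrite eqxx.
Qed.

Lemma green S (f g : V -> R) :
  \sum_u g u * lap S f u = \sum_(e | S e) Df g e * Df f e / L e.
Proof.
rewrite /lap.
under eq_bigr => u _ do rewrite mulrDr !mulr_sumr.
rewrite big_split /= !sum_end -big_split /=.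
apply: eq_bigr => e _; rewrite /Df; field.
by apply/lt0r_neq0.
Qed.

Lemma lap_lin S (a b : R) (f g : V -> R) u :
  lap S (fun x => a * f x + b * g x) u = a * lap S f u + b * lap S g u.
Proof.
have H (P : pred E) (h : E -> V) :
  \sum_(e | P e) (a * f u + b * g u - (a * f (h e) + b * g (h e))) / L e =
  a * \sum_(e | P e) (f u - f (h e)) / L e + b * \sum_(e | P e) (g u - g (h e)) / L e.
  rewrite !mulr_sumr -big_split; apply: eq_bigr => e _ /=. ring.
rewrite /lap !H; ring.
Qed.

Lemma lap_const S (f : V -> R) (c : R) u : lap S (fun x => f x + c) u = lap S f u.
Proof.
rewrite /lap; congr (_ + _); apply: eq_bigr => e _; congr (_ / _); ring.
Qed.

Lemma lap_sum S (I : finType) (F : I -> V -> R) u :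
  lap S (fun x => \sum_i F i x) u = \sum_i lap S (F i) u.
Proof.
rewrite /lap big_split /=; congr (_ + _);
  rewrite (exchange_big) /=; apply: eq_bigr => e _;
  by rewrite -sumrB mulr_suml.
Qed.

Lemma sum_lap S f : \sum_u lap S f u = 0.
Proof.
have := green S f (fun _ => 1); rewrite /Df.
under eq_bigr do rewrite mul1r.
move=> ->; apply: big1 => e _; rewrite subrr !mul0r //.
Qed.

Lemma lap_ext S (f g : V -> R) u : (forall x, f x = g x) -> lap S f u = lap S g u.
Proof. by move=> fg; rewrite /lap; congr (_ + _); apply: eq_bigr => e _; rewrite !fg. Qed.

Lemma lap_scale S (c : R) (f : V -> R) u : lap S (fun x => c * f x) u = c * lap S f u.
Proof.
rewrite -[RHS]addr0 -(mul0r (lap S f u)) -lap_lin.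
by apply: lap_ext => x; rewrite mul0r addr0.
Qed.

Definition conn S := connectedb ep1 ep2 S.

Lemma conn_path S (P : V -> V -> Prop) :
  conn S -> (forall x, P x x) -> (forall x y z, P x y -> P y z -> P x z) ->
  (forall x y, adj ep1 ep2 S x y -> P x y) -> forall x y, P x y.
Proof.
move=> /forallP cS Prefl Ptr Padj x y.
have /forallP/(_ y)/connectP[p pth ->] := cS x.
elim: p x pth => [|z p IH] x /=; first by move=> _; exact: Prefl.
by case/andP=> xz pth; apply: Ptr (Padj _ _ xz) (IH _ pth).
Qed.

Lemma harm_const S h : conn S -> (forall u, lap S h u = 0) -> forall u w, h u = h w.
Proof.
move=> cS hh.
have E0 : \sum_(e | S e) Df h e * Df h e / L e = 0.
  by rewrite -green big1 // => u _; rewrite hh mulr0.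
have Ee : forall e, S e -> h (ep1 e) = h (ep2 e).
  move=> e Se.
  have : Df h e * Df h e / L e = 0.
    apply: (psumr_eq0P _ E0 Se) => i _.
    by apply: divr_ge0; [rewrite -expr2; exact: sqr_ge0 | exact: ltW].
  move/eqP; rewrite mulf_eq0 invr_eq0 (negbTE (lt0r_neq0 (L_pos e))) orbF.
  by rewrite mulf_eq0 orbb subr_eq0 => /eqP.
apply: (@conn_path S (fun u w => h u = h w) cS) => //.
- by move=> x y z -> ->.
- move=> x y /existsP[e /andP[Se /orP[/andP[/eqP<- /eqP<-]|/andP[/eqP<- /eqP<-]]]];
  by rewrite Ee.
Qed.

Lemma lap_diff_const S f g : conn S -> (forall u, lap S f u = lap S g u) ->
  forall u w, f u - g u = f w - g w.
Proof.
move=> cS fg; apply: (@harm_const S (fun x => f x - g x) cS) => u.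
have -> : lap S (fun x => f x - g x) u = lap S (fun x => 1 * f x + (-1) * g x) u.
  by apply: lap_ext => x; ring.
by rewrite lap_lin fg; ring.
Qed.

Definition Tmap S z (f : V -> R) (w : V) := if w == z then f z else lap S f w.

Lemma Tmap_sum S z (I : finType) (c : I -> R) (F : I -> V -> R) w :
  Tmap S z (fun x => \sum_i c i * F i x) w = \sum_i c i * Tmap S z (F i) w.
Proof.
rewrite /Tmap; case: (w == z) => //.
rewrite lap_sum; apply: eq_bigr => i _; exact: lap_scale.
Qed.

Lemma Tmap_ext S z f g w : (forall x, f x = g x) -> Tmap S z f w = Tmap S z g w.
Proof. by move=> fg; rewrite /Tmap fg (lap_ext _ _ fg). Qed.

Lemma voltage_exists S z y : conn S -> exists f, is_voltage ep1 ep2 L S z y f.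
Proof.
move=> cS.
pose n := #|V|.
pose fv (u : 'rV[R]_n) (x : V) := u 0 (enum_rank x).
pose A : 'M[R]_n := \matrix_(i, j) Tmap S z (fun x => (x == enum_val i)%:R) (enum_val j).
have fvE u x : fv u x = \sum_i u 0 i * (x == enum_val i)%:R.
  rewrite (bigD1 (enum_rank x)) //= enum_rankK eqxx mulr1 big1 ?addr0 //.
  move=> i /negbTE ne; case: eqP => [xe|]; last by rewrite mulr0.
  by rewrite xe enum_valK eqxx in ne.
have uA u j : (u *m A) 0 j = Tmap S z (fv u) (enum_val j).
  rewrite mxE (Tmap_ext _ _ _ (fvE u)) Tmap_sum.
  by apply: eq_bigr => i _; rewrite mxE.
have Tsum f : \sum_w lap S f w = 0 := sum_lap S f.
have inj (u : 'rV[R]_n) : u *m A = 0 -> u = 0.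
  move=> uA0.
  have T0 w : Tmap S z (fv u) w = 0.
    by rewrite -(enum_rankK w) -uA uA0 mxE.
  have fz : fv u z = 0 by have := T0 z; rewrite /Tmap eqxx.
  have hl w : lap S (fv u) w = 0.
    case: (eqVneq w z) => [->|wz]; last by have := T0 w; rewrite /Tmap (negbTE wz).
    have := Tsum (fv u); rewrite (bigD1 z) //= big1 ?addr0 //.
    by move=> w' wz; have := T0 w'; rewrite /Tmap (negbTE wz).
  apply/rowP => i; rewrite mxE.
  have := harm_const cS hl (enum_val i) z; rewrite fz /fv enum_valK => ->.
  done.
have Aunit : A \in unitmx.
  rewrite -row_free_unit -kermx_eq0; apply/rowV0P => v /sub_kermxP.
  exact: inj.
pose tg (w : V) : R := (w == y)%:R - (w == z)%:R.
pose t : 'rV[R]_n := \row_j (if enum_val j == z then 0 else tg (enum_val j)).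
pose u := t *m invmx A.
have ut : u *m A = t by rewrite mulmxKV.
have Tf w : Tmap S z (fv u) w = if w == z then 0 else tg w.
  by rewrite -(enum_rankK w) -uA ut mxE.
exists (fv u); split.
  by have := Tf z; rewrite /Tmap eqxx.
move=> w.
have lw w' : w' != z -> lap S (fv u) w' = tg w'.
  by move=> ne; have := Tf w'; rewrite /Tmap (negbTE ne).
have tsum : \sum_w tg w = 0.
  rewrite /tg sumrB (bigD1 y) //= (bigD1 z (P := xpredT)) //= !eqxx !big1 ?addr0 ?subrr //.
  - by move=> i /negbTE ->.
  - by move=> i /negbTE ->.
rewrite -/(lap S (fv u) w) -/(tg w).
case: (eqVneq w z) => [->|wz]; last exact: lw.
have := Tsum (fv u); rewrite (bigD1 z) //=.
rewrite (eq_bigr tg); last by move=> i; exact: lw.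
move: tsum; rewrite (bigD1 z) //= => ts h.
by move/eqP: h; rewrite addr_eq0 => /eqP ->; move/eqP: ts; rewrite addr_eq0 => /eqP ->.
Qed.

Lemma voltage_spec S z y : conn S -> is_voltage ep1 ep2 L S z y (voltage ep1 ep2 L S z y).
Proof. by move=> cS; apply: epsilon_spec; exact: voltage_exists. Qed.

Lemma voltage_lap S z y w : conn S ->
  lap S (voltage ep1 ep2 L S z y) w = (w == y)%:R - (w == z)%:R.
Proof. by move=> cS; case: (voltage_spec z y cS) => _ H; exact: H. Qed.

Lemma voltage_z S z y : conn S -> voltage ep1 ep2 L S z y z = 0.
Proof. by move=> cS; case: (voltage_spec z y cS). Qed.

Lemma top_nbr S f x : (forall w, f w <= f x) -> lap S f x <= 0 ->
  (forall e, S e -> ep1 e = x -> f (ep2 e) = f x) /\ (forall e, S e -> ep2 e = x -> f (ep1 e) = f x).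
Proof.
move=> fmax lx.
have t_ge0 (h : E -> V) e : 0 <= (f x - f (h e)) / L e.
  by apply: divr_ge0; [rewrite subr_ge0 | exact: ltW].
have s1 : 0 <= \sum_(e | S e && (ep1 e == x)) (f x - f (ep2 e)) / L e.
  by apply: sumr_ge0 => e _; exact: t_ge0.
have s2 : 0 <= \sum_(e | S e && (ep2 e == x)) (f x - f (ep1 e)) / L e.
  by apply: sumr_ge0 => e _; exact: t_ge0.
have l0 : lap S f x = 0 by apply/eqP; rewrite eq_le lx addr_ge0.
move/eqP: l0; rewrite /lap paddr_eq0 // => /andP[/eqP z1 /eqP z2].
have term (h : E -> V) e : (f x - f (h e)) / L e = 0 -> f (h e) = f x.
  move/eqP; rewrite mulf_eq0 invr_eq0 (negbTE (lt0r_neq0 (L_pos e))) orbF subr_eq0.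
  by move/eqP.
split=> e Se he; apply: term.
- by apply: (psumr_eq0P _ z1) => [i _|]; [exact: t_ge0 | rewrite Se he eqxx].
- by apply: (psumr_eq0P _ z2) => [i _|]; [exact: t_ge0 | rewrite Se he eqxx].
Qed.

Lemma max_principle S f s : conn S -> (forall w, w != s -> lap S f w <= 0) ->
  forall w, f w <= f s.
Proof.
move=> cS hs.
have [m _ Hm] := @arg_maxP _ _ V s xpredT f isT.
have fm w : f w <= f m by exact: Hm.
case: (eqVneq (f s) (f m)) => [-> w|ne]; first exact: fm.
exfalso.
suff : f m = f m -> f s = f m by move=> /(_ erefl) /eqP; rewrite (negbTE ne).
apply: (@conn_path S (fun x y => f x = f m -> f y = f m) cS).
- by [].
- by move=> x y z h1 h2 /h1 /h2.
move=> x y /existsP[e /andP[Se hxy]] fx.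
have fmx w : f w <= f x by rewrite fx.
have xs : x != s by apply: contra ne => /eqP <-; rewrite fx.
have [N1 N2] := top_nbr fmx (hs x xs).
case/orP: hxy => /andP[/eqP h1 /eqP h2].
- by rewrite -h2 N1 // fx.
- by rewrite -h1 N2 // fx.
Qed.

Lemma sum_del (F : E -> R) (P : pred E) e :
  \sum_(i | P i) F i = (P e)%:R * F e + \sum_(i | (i != e) && P i) F i.
Proof.
case Pe: (P e).
  by rewrite (bigD1 e) //= mul1r; congr (_ + _); apply: eq_bigl => i; rewrite andbC.
rewrite mul0r add0r; apply: eq_bigl => i.
by case: eqVneq => [->|]; rewrite ?Pe.
Qed.

Lemma lap_del e f w :
  lap (@allE E) f w = lap (delE e) f w
    + (ep1 e == w)%:R * (f w - f (ep2 e)) / L e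
    + (ep2 e == w)%:R * (f w - f (ep1 e)) / L e.
Proof.
rewrite /lap /allE /delE /=.
have s1 := sum_del (fun i => (f w - f (ep2 i)) / L i) (fun i => ep1 i == w) e.
have s2 := sum_del (fun i => (f w - f (ep1 i)) / L i) (fun i => ep2 i == w) e.
simpl in s1, s2; rewrite s1 s2; ring.
Qed.

End Net.

Section Main.
Variables (R : realType) (V E : finType) (ep1 ep2 : E -> V) (L : E -> R).
Hypothesis L_pos : forall e, 0 < L e.
Hypothesis cG : conn ep1 ep2 (@allE E).
Variable p : V.

Local Notation lapG := (lap ep1 ep2 L (@allE E)).
Local Notation Df := (Df ep1 ep2).
Definition uu x := voltage ep1 ep2 L (@allE E) p x.
Definition dd x := uu x x.

Lemma sum_delta (g : V -> R) a b : \sum_w g w * ((w == a)%:R - (w == b)%:R) = g a - g b.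
Proof.
under eq_bigr do rewrite mulrBr.
rewrite sumrB; congr (_ - _).
  rewrite (bigD1 a) //= eqxx mulr1 big1 ?addr0 // => w /negbTE ->; rewrite mulr0 //.
rewrite (bigD1 b) //= eqxx mulr1 big1 ?addr0 // => w /negbTE ->; rewrite mulr0 //.
Qed.

Lemma uu_p x : uu x p = 0.
Proof. by case: (voltage_spec L_pos p x cG). Qed.

Lemma uu_lap x w : lapG (uu x) w = (w == x)%:R - (w == p)%:R.
Proof. by case: (voltage_spec L_pos p x cG) => _ H; exact: H. Qed.

Lemma uu_green x y : \sum_e Df (uu x) e * Df (uu y) e / L e = uu x y.
Proof.
have <- : \sum_w uu x w * lapG (uu y) w = uu x y.
  by rewrite (eq_bigr _ (fun w _ => congr1 _ (uu_lap y w))) sum_delta uu_p subr0.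
by rewrite (green ep1 ep2 L_pos).
Qed.

Lemma uu_sym x y : uu x y = uu y x.
Proof.
rewrite -uu_green -uu_green; apply: eq_bigr => e _; by rewrite [Df (uu x) e * _]mulrC.
Qed.

Lemma dd_green x : \sum_e Df dd e * Df (uu x) e / L e = dd x.
Proof.
have <- : \sum_w dd w * lapG (uu x) w = dd x.
  by rewrite (eq_bigr _ (fun w _ => congr1 _ (uu_lap x w))) sum_delta /dd uu_p subr0.
by rewrite (green ep1 ep2 L_pos).
Qed.

Lemma res_uu a b : res ep1 ep2 L (@allE E) a b = dd a - 2 * uu a b + dd b.
Proof.
rewrite /res /jhat.
have hb := voltage_z L_pos b a cG.
have hl := fun w => voltage_lap L_pos b a w cG.
move: hb hl; set h := voltage ep1 ep2 L (@allE E) b a => hb hl.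
have K : forall w1 w2, h w1 - (uu a w1 - uu b w1) = h w2 - (uu a w2 - uu b w2).
  apply: (lap_diff_const L_pos cG) => w.
  rewrite hl (@lap_ext _ _ _ ep1 ep2 L _ (fun x => uu a x - uu b x) (fun x => 1 * uu a x + (-1) * uu b x)); last by move=> x; ring.
  rewrite lap_lin !uu_lap; ring.
have := K a b; rewrite hb /dd (uu_sym b a); move=> Hab.
have -> : h a = (h a - (uu a a - uu a b)) + (uu a a - uu a b) by ring.
rewrite Hab; ring.
Qed.

Lemma edge_facts a b :
  let h := voltage ep1 ep2 L (@allE E) b a in
  [/\ dd a - dd b = h a - 2 * h p, 0 <= h p & h p <= h a].
Proof.
move=> h.
have hb : h b = 0 := voltage_z L_pos b a cG.
have hl : forall w, lapG h w = (w == a)%:R - (w == b)%:R :=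
  fun w => voltage_lap L_pos b a w cG.
clearbody h.
have K : forall w1 w2, h w1 - (uu a w1 - uu b w1) = h w2 - (uu a w2 - uu b w2).
  apply: (lap_diff_const L_pos cG) => w.
  rewrite hl (@lap_ext _ _ _ ep1 ep2 L _ (fun x => uu a x - uu b x) (fun x => 1 * uu a x + (-1) * uu b x)); last by move=> x; ring.
  rewrite lap_lin !uu_lap; ring.
split.
- have K1 := K a p; have K2 := K b p.
  rewrite !uu_p hb (uu_sym b a) in K1 K2; rewrite /dd.
  lra.
- have M := @max_principle _ _ _ ep1 ep2 L L_pos (@allE E) (fun x => - h x) b cG.
  have : - h p <= - h b.
    apply: M => w wb.
    rewrite (@lap_ext _ _ _ ep1 ep2 L _ (fun x => - h x) (fun x => (-1) * h x)); last by move=> x; ring.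
    by rewrite lap_scale hl (negbTE wb) subr0 mulN1r oppr_le0 ler0n.
  by rewrite hb oppr0 oppr_le0.
- apply: (@max_principle _ _ _ ep1 ep2 L L_pos (@allE E) h a cG) => w wa.
  by rewrite hl (negbTE wa) sub0r oppr_le0 ler0n.
Qed.

Lemma sum_cst (c : R) : \sum_(y : V) c = #|V|%:R * c.
Proof. by rewrite sumr_const mulr_natl. Qed.

Lemma core :
  #|V|%:R * \sum_x dd x - \sum_x \sum_y uu x y <=
  (#|V|%:R ^+ 2 / 4) * \sum_e Df dd e ^+ 2 / L e.
Proof.
set n : R := #|V|%:R.
set Q := \sum_e Df dd e ^+ 2 / L e.
pose H e x := Df (uu x) e - Df dd e / 2.
have key x y : \sum_e H e x * H e y / L e = uu x y - dd x / 2 - dd y / 2 + Q / 4.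
  rewrite -uu_green -(dd_green x) -(dd_green y) /Q !mulr_suml.
  rewrite -!sumrB -big_split /=; apply: eq_bigr => e _; rewrite /H.
  move: (Df (uu x) e) (Df (uu y) e) (Df dd e) => A B C; field; exact: lt0r_neq0 (L_pos e).
have pos : 0 <= \sum_e (\sum_x H e x) ^+ 2 / L e.
  apply: sumr_ge0 => e _; apply: divr_ge0; [exact: sqr_ge0 | exact: ltW].
have expand : \sum_e (\sum_x H e x) ^+ 2 / L e = \sum_x \sum_y \sum_e H e x * H e y / L e.
  under eq_bigr do rewrite expr2 mulr_suml mulr_suml.
  rewrite exchange_big /=; apply: eq_bigr => x _.
  under eq_bigr do rewrite mulr_sumr mulr_suml.
  by rewrite exchange_big.
move: pos; rewrite expand.
under eq_bigr do under eq_bigr do rewrite key.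
have S1 x : \sum_y (uu x y - dd x / 2 - dd y / 2 + Q / 4) =
   \sum_y uu x y - n * (dd x / 2) - (\sum_y dd y) / 2 + n * (Q / 4).
  by rewrite big_split sumrB sumrB /= !sum_cst -/n -mulr_suml.
rewrite (eq_bigr _ (fun x _ => S1 x)).
rewrite big_split sumrB sumrB /= !sum_cst -/n -mulr_sumr -mulr_suml.
move=> h.
have -> : n ^+ 2 / 4 * Q = n * (n * (Q / 4)) by field.
lra.
Qed.

Lemma adj_csym S : connect_sym (adj ep1 ep2 S).
Proof.
apply: sym_connect_sym => x y; rewrite /adj.
apply/existsP/existsP => -[e He]; exists e; move: He;
  by rewrite [(_ && _) || _]orbC.
Qed.

Lemma bridge_h e : is_bridge ep1 ep2 e ->
  let h := voltage ep1 ep2 L (@allE E) (ep2 e) (ep1 e) in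
  h (ep1 e) = L e /\ (h p = 0 \/ h p = L e).
Proof.
move=> br h.
set a := ep1 e; set b := ep2 e.
set G' := delE e.
pose C x := connect (adj ep1 ep2 G') a x.
have symA := adj_csym G'.
have nCb : ~~ C b.
  apply/negP => Cb; move: br; rewrite /is_bridge => /negP; apply.
  apply/forallP => u; apply/forallP => w.
  apply: (@conn_path _ _ ep1 ep2 (@allE E) (fun u w => connect (adj ep1 ep2 G') u w) cG).
  - by move=> x; exact: connect0.
  - by move=> x y z; exact: connect_trans.
  move=> x y /existsP[e' /andP[_ hxy]]; case: (eqVneq e' e) => [ee|ne].
    move: hxy; rewrite ee -/a -/b; case/orP => /andP[/eqP<- /eqP<-] //.
    by rewrite symA.
  by apply: connect1; apply/existsP; exists e'; rewrite /G' /delE inE ne hxy.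
have Ccl x y : adj ep1 ep2 G' x y -> C x = C y.
  move=> xy; apply/idP/idP => Cx.
    exact: connect_trans Cx (connect1 xy).
  by apply: connect_trans Cx _; rewrite symA; exact: connect1 xy.
have Ca : C a := connect0 _ a.
have ab : a != b by apply: contraNneq nCb => <-.
pose psi x := if C x then L e else 0.
have psil w : lapG psi w = (w == a)%:R - (w == b)%:R.
  rewrite (lap_del ep1 ep2 L e).
  have -> : lap ep1 ep2 L (delE e) psi w = 0.
    rewrite /lap !big1 ?addr0 //.
    - move=> e' /andP[ne /eqP h1].
      have : adj ep1 ep2 G' (ep1 e') (ep2 e').
        by apply/existsP; exists e'; rewrite /G' ne !eqxx.
      by move/Ccl; rewrite /psi h1 => ->; rewrite subrr mul0r.
    - move=> e' /andP[ne /eqP h1].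
      have : adj ep1 ep2 G' (ep1 e') (ep2 e').
        by apply/existsP; exists e'; rewrite /G' ne !eqxx.
      by move/Ccl; rewrite /psi h1 => ->; rewrite subrr mul0r.
  rewrite -/a -/b /psi Ca (negbTE nCb).
  have Le : L e != 0 := lt0r_neq0 (L_pos e).
  case: (eqVneq w a) => [->|wa].
    rewrite Ca [b == a]eq_sym (negbTE ab) /=; field; exact: Le.
  case: (eqVneq w b) => [->|wb].
    rewrite (negbTE nCb) /=; field; exact: Le.
  by rewrite /= !mul0r subrr !addr0.
have hb : h b = 0 := voltage_z L_pos b a cG.
have hl : forall w, lapG h w = (w == a)%:R - (w == b)%:R :=
  fun w => voltage_lap L_pos b a w cG.
have hpl : forall w, lapG h w = lapG psi w by move=> w; rewrite hl psil.
have K := @lap_diff_const _ _ _ ep1 ep2 L L_pos (@allE E) h psi cG hpl.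
have hpsi w : h w = psi w.
  by have := K w b; rewrite hb /psi (negbTE nCb) subrr => /eqP; rewrite subr_eq0 => /eqP.
rewrite !hpsi /psi Ca; split=> //.
by case: (C p); [right | left].
Qed.

Lemma yterms e :
  let h := voltage ep1 ep2 L (@allE E) (ep2 e) (ep1 e) in
  yterm1 ep1 ep2 L e = h (ep1 e) ^+ 2 / L e /\
  yterm2 ep1 ep2 L e p = (h (ep1 e) - 2 * h p) ^+ 2 / L e.
Proof.
move=> h.
have Le : L e != 0 := lt0r_neq0 (L_pos e).
rewrite /yterm1 /yterm2; case: ifP => br.
  move: (bridge_h br) => /= [ha hp]; rewrite -/h in ha hp *.
  rewrite ha; case: hp => ->; split; field; exact: Le.
have cG' : conn ep1 ep2 (delE e) by move: br; rewrite /is_bridge => /negbFE.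
set a := ep1 e; set b := ep2 e.
set phi := voltage ep1 ep2 L (delE e) b a.
set psi := voltage ep1 ep2 L (delE e) a b.
change (Ri ep1 ep2 L e) with (phi a).
change (Rai ep1 ep2 L e p) with (psi p).
change (Rbi ep1 ep2 L e p) with (phi p).
have phib : phi b = 0 := voltage_z L_pos b a cG'.
have phil : forall w, lap ep1 ep2 L (delE e) phi w = (w == a)%:R - (w == b)%:R :=
  fun w => voltage_lap L_pos b a w cG'.
have psia : psi a = 0 := voltage_z L_pos a b cG'.
have psil : forall w, lap ep1 ep2 L (delE e) psi w = (w == b)%:R - (w == a)%:R :=
  fun w => voltage_lap L_pos a b w cG'.
clearbody phi psi.
have psip : psi p = phi a - phi p.
  have hpl : forall w, lap ep1 ep2 L (delE e) psi w = lap ep1 ep2 L (delE e) (fun x => - phi x) w.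
    move=> w; rewrite (@lap_ext _ _ _ ep1 ep2 L _ (fun x => - phi x) (fun x => (-1) * phi x)); last by move=> x; ring.
    by rewrite lap_scale psil phil; ring.
  have := @lap_diff_const _ _ _ ep1 ep2 L L_pos (delE e) psi (fun x => - phi x) cG' hpl p a.
  rewrite psia; lra.
have R0 : 0 <= phi a.
  rewrite -phib; apply: (@max_principle _ _ _ ep1 ep2 L L_pos (delE e) phi a cG') => w wa.
  by rewrite phil (negbTE wa) sub0r oppr_le0 ler0n.
have hL : L e + phi a != 0.
  by apply: lt0r_neq0; apply: ltr_wpDr R0 (L_pos e).
set c := L e / (L e + phi a).
have t1 w : (a == w)%:R * (phi w - phi b) = (w == a)%:R * phi a.
  by case: (eqVneq a w) => [<-|ne]; rewrite ?phib ?subr0 ?mul0r.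
have t2 w : (b == w)%:R * (phi w - phi a) = - ((w == b)%:R * phi a).
  by case: (eqVneq b w) => [<-|ne]; rewrite ?phib ?sub0r ?mulrN ?mul0r ?oppr0.
have cl w : lapG (fun x => c * phi x) w = (w == a)%:R - (w == b)%:R.
  rewrite lap_scale (lap_del ep1 ep2 L e) phil -/a -/b t1 t2 /c.
  by field; apply/andP; split.
have hb : h b = 0 := voltage_z L_pos b a cG.
have hl : forall w, lapG h w = (w == a)%:R - (w == b)%:R :=
  fun w => voltage_lap L_pos b a w cG.
have hpl : forall w, lapG h w = lapG (fun x => c * phi x) w by move=> w; rewrite hl cl.
have K := @lap_diff_const _ _ _ ep1 ep2 L L_pos (@allE E) h _ cG hpl.
have hphi w : h w = c * phi w.
  by have := K w b; rewrite hb phib mulr0 subrr => /eqP; rewrite subr_eq0 => /eqP.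
rewrite !hphi psip /c; split; field; by apply/andP; split.
Qed.

Lemma main_ineq : Kf ep1 ep2 L <= (#|V|%:R ^+ 2 / 4) * ygraph ep1 ep2 L p.
Proof.
set n : R := #|V|%:R.
set Q := \sum_e Df dd e ^+ 2 / L e.
have Kf_eq : Kf ep1 ep2 L = n * \sum_x dd x - \sum_x \sum_y uu x y.
  rewrite /Kf.
  have S1 a : \sum_b res ep1 ep2 L (@allE E) a b = n * dd a - 2 * \sum_y uu a y + \sum_y dd y.
    rewrite (eq_bigr _ (fun b _ => res_uu a b)).
    by rewrite big_split sumrB /= !sum_cst -/n -mulr_sumr.
  rewrite (eq_bigr _ (fun a _ => S1 a)).
  by rewrite big_split sumrB /= sum_cst -/n -mulr_sumr -mulr_sumr; field.
have per e : yterm2 ep1 ep2 L e p = Df dd e ^+ 2 / L e /\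
             yterm2 ep1 ep2 L e p <= yterm1 ep1 ep2 L e.
  have [y1 y2] := yterms e.
  have [d0 h0 h1] := edge_facts (ep1 e) (ep2 e).
  rewrite y1 y2; split.
    by rewrite /Df d0.
  rewrite ler_pM2r ?invr_gt0 //.
  move: (voltage ep1 ep2 L (@allE E) (ep2 e) (ep1 e)) h0 h1 => h h0 h1.
  nra.
have yge : Q <= ygraph ep1 ep2 L p.
  rewrite /ygraph /Q.
  have -> : \sum_e Df dd e ^+ 2 / L e = \sum_e yterm2 ep1 ep2 L e p.
    by apply: eq_bigr => e _; rewrite (proj1 (per e)).
  have : \sum_e yterm2 ep1 ep2 L e p <= \sum_e yterm1 ep1 ep2 L e.
    by apply: ler_sum => e _; exact: (proj2 (per e)).
  lra.
rewrite Kf_eq; apply: le_trans (core) _.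
apply: ler_wpM2l => //.
by apply: divr_ge0; [exact: sqr_ge0 | ].
Qed.

End Main.

Theorem corollary3p15 (R : realType) (V E : finType) (ep1 ep2 : E -> V)
    (L : E -> R)
    (L_pos : forall e : E, 0 < L e)
    (Gconn : connectedb ep1 ep2 (@allE E))
    (p : V) :
  Kf ep1 ep2 L <= (#|V|%:R ^+ 2 / 4) * ygraph ep1 ep2 L p.
Proof. exact: (main_ineq L_pos Gconn). Qed.
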